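(* Let $\overline{H}_n = \sum_{j=1}^n \frac{(-1)^{j-1}}{j}$ denote the $n$th skew-harmonic number and let $\operatorname{Ein}(z) = \int_0^z \frac{1 - e^{-t}}{t}\,dt$ denote the complementary exponential integral. For all real $y$, $$\sum_{n = 1}^\infty \overline{H}_n\left(e^y - 1 - \frac{y}{1!} - \frac{y^2}{2!} - \ldots - \frac{y^n}{n!}\right) = y e^y\left[\operatorname{Ein}(2y) - \operatorname{Ein}(y)\right] - \cosh (y) +1.$$ *)

(* Defs.v *)
From Stdlib Require Import Reals.
From Coquelicot Require Import Coquelicot.
Open Scope R_scope.

Fixpoint skew_harmonic (n : nat) : R :=
  match n with
  | O => 0
  | S m => skew_harmonic m + (-1) ^ m / INR (S m)
  end.

(* integrand (1 - e^{-t})/t, with its removable-singularity value 1 at t = 0 *)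
Definition ein_integrand (t : R) : R :=
  if Req_EM_T t 0 then 1 else (1 - exp (- t)) / t.

Definition Ein (z : R) : R := RInt ein_integrand 0 z.

Definition exp_tail (y : R) (n : nat) : R :=
  exp y - sum_f_R0 (fun k => y ^ k / INR (Factorial.fact k)) n.

(* Main.v *)
Require Import Defs.
From Stdlib Require Import Reals Lra Lia.
From Coquelicot Require Import Coquelicot.
Open Scope R_scope.

Fixpoint cc (k : nat) : R :=
  match k with O => 0 | S m => cc m + skew_harmonic m end.

Definition rr (k : nat) : R := 2 ^ k / INR (Factorial.fact k).
Definition ga (k : nat) : R := cc k / INR (Factorial.fact k).
Definition ha (k : nat) : R := skew_harmonic k / INR (Factorial.fact k).
Definition ba (k : nat) : R := (-1) ^ k / INR (Factorial.fact (S k)).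

Lemma fact_pos n : 0 < INR (Factorial.fact n).
Proof. apply lt_0_INR, Factorial.lt_O_fact. Qed.

Lemma rad_inf_le (a b : nat -> R) :
  (forall n, Rabs (a n) <= Rabs (b n)) -> CV_radius b = p_infty -> CV_radius a = p_infty.
Proof.
  intros Hab Hb.
  assert (H := is_lub_Rbar_subset
    (fun r => exists M, forall n, Rabs (a n * r^n) <= M)
    (fun r => exists M, forall n, Rabs (b n * r ^n) <= M) (CV_radius a) (CV_radius b)).
  rewrite Hb in H.
  assert (H' : Rbar_le p_infty (CV_radius a)).
  { apply H.
    - intros x [M HM]; exists M; intros n; eapply Rle_trans, HM.
      rewrite !Rabs_mult; apply Rmult_le_compat_r; [apply Rabs_pos| apply Hab].
    - apply CV_radius_bounded.
    - rewrite <- Hb; apply CV_radius_bounded. }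
  destruct (CV_radius a); simpl in H'; tauto.
Qed.

Lemma rr_rad : CV_radius rr = p_infty.
Proof.
  apply CV_radius_infinite_DAlembert.
  - intros n; unfold rr; apply Rgt_not_eq, Rdiv_lt_0_compat;
    [apply pow_lt; lra | apply fact_pos].
  - apply is_lim_seq_ext with (fun n => 2 * / INR (S n)).
    + intros n; unfold rr. rewrite fact_simpl, mult_INR.
      assert (H1 := fact_pos n). assert (H2 : 0 < INR (S n)) by (apply lt_0_INR; lia).
      assert (H3 : 0 < 2 ^ n) by (apply pow_lt; lra).
      change (2 ^ S n) with (2 * 2 ^ n).
      rewrite Rabs_pos_eq.
      * field. lra.
      * apply Rlt_le. apply Rmult_lt_0_compat.
        apply Rdiv_lt_0_compat; [lra| apply Rmult_lt_0_compat; lra].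
        apply Rinv_0_lt_compat, Rdiv_lt_0_compat; lra.
    + replace (Finite 0) with (Rbar_mult 2 0) by (simpl; f_equal; ring).
      apply is_lim_seq_scal_l.
      replace (Finite 0) with (Rbar_inv p_infty) by reflexivity.
      apply is_lim_seq_inv; [|discriminate].
      apply (is_lim_seq_incr_1 INR). apply is_lim_seq_INR.
Qed.

Lemma H_bound n : Rabs (skew_harmonic n) <= 2 ^ n - 1.
Proof.
  induction n as [|n IH].
  - simpl; rewrite Rabs_R0; lra.
  - change (skew_harmonic (S n)) with (skew_harmonic n + (-1)^n / INR (S n)).
    change (2 ^ S n) with (2 * 2^n).
    eapply Rle_trans; [apply Rabs_triang|].
    assert (Rabs ((-1) ^ n / INR (S n)) <= 1).
    { unfold Rdiv; rewrite Rabs_mult, pow_1_abs, Rmult_1_l.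
      assert (1 <= INR (S n)) by (apply (le_INR 1); lia).
      rewrite Rabs_pos_eq by (apply Rlt_le, Rinv_0_lt_compat; lra).
      rewrite <- Rinv_1. apply Rinv_le_contravar; lra. }
    assert (1 <= 2 ^ n) by (apply pow_R1_Rle; lra).
    lra.
Qed.

Lemma cc_bound n : Rabs (cc n) <= 2 ^ n.
Proof.
  induction n as [|n IH].
  - simpl; rewrite Rabs_R0; lra.
  - change (cc (S n)) with (cc n + skew_harmonic n). change (2 ^ S n) with (2 * 2^n).
    eapply Rle_trans; [apply Rabs_triang|]. generalize (H_bound n); lra.
Qed.

Lemma rabs_rr n : Rabs (rr n) = rr n.
Proof. apply Rabs_pos_eq; unfold rr; apply Rlt_le, Rdiv_lt_0_compat;
    [apply pow_lt; lra | apply fact_pos]. Qed.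

Lemma div_bound (x : R) n : Rabs x <= 2 ^ n -> Rabs (x / INR (Factorial.fact n)) <= Rabs (rr n).
Proof.
  intros H. rewrite rabs_rr; unfold rr, Rdiv. rewrite Rabs_mult.
  rewrite (Rabs_pos_eq (/ _)) by (apply Rlt_le, Rinv_0_lt_compat, fact_pos).
  apply Rmult_le_compat_r; [apply Rlt_le, Rinv_0_lt_compat, fact_pos|exact H].
Qed.

Lemma ga_rad : CV_radius ga = p_infty.
Proof. apply (rad_inf_le _ rr); [intros n; apply div_bound, cc_bound | apply rr_rad]. Qed.

Lemma ha_rad : CV_radius ha = p_infty.
Proof. apply (rad_inf_le _ rr); [intros n; apply div_bound; generalize (H_bound n); lra | apply rr_rad]. Qed.

Lemma ba_rad : CV_radius ba = p_infty.
Proof.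
  apply (rad_inf_le _ rr); [intros n | apply rr_rad].
  unfold ba. rewrite rabs_rr. unfold rr, Rdiv. rewrite Rabs_mult, pow_1_abs, Rmult_1_l.
  rewrite Rabs_pos_eq by (apply Rlt_le, Rinv_0_lt_compat, fact_pos).
  assert (1 <= 2 ^ n) by (apply pow_R1_Rle; lra).
  assert (H1 := fact_pos n).
  assert (INR (Factorial.fact n) <= INR (Factorial.fact (S n))).
  { apply le_INR. rewrite fact_simpl. lia. }
  apply Rle_trans with (/ INR (Factorial.fact n)).
  - apply Rinv_le_contravar; lra.
  - rewrite <- (Rmult_1_l (/ _)) at 1. apply Rmult_le_compat_r; [apply Rlt_le, Rinv_0_lt_compat|]; lra.
Qed.

Lemma inrad (a : nat -> R) x : CV_radius a = p_infty -> Rbar_lt (Rabs x) (CV_radius a).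
Proof. intros H; rewrite H; simpl; exact I. Qed.

Lemma pnR (x:R) k : @pow_n (AbsRing.Ring R_AbsRing) x k = x ^ k.
Proof. induction k as [|k IH]; simpl; [reflexivity| rewrite IH; reflexivity]. Qed.

Lemma tB_series t : is_pseries (PS_incr_1 ba) t (1 - exp (- t)).
Proof.
  assert (He := is_exp_Reals (- t)).
  unfold is_pseries in *.
  assert (He2 : is_series (fun k => scal (pow_n (- t) (S k)) (/ INR (Factorial.fact (S k)))) (exp (-t) - 1)).
  { apply (is_series_incr_1 (fun k => scal (pow_n (- t) k) (/ INR (Factorial.fact k)))).
    match goal with |- is_series _ ?l => replace l with (exp (-t)) end.
    exact He.
    unfold plus, scal; simpl. unfold mult, one; simpl. field. }
  apply is_series_opp in He2.
  apply is_series_decr_1.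
  match goal with |- is_series _ ?l => replace l with (opp (exp (- t) - 1)) end.
  2: { unfold plus, opp, scal; simpl. unfold mult; simpl. unfold one, zero; simpl. ring. }
  revert He2. apply is_series_ext. intros n.
  rewrite !pnR. unfold opp, scal; simpl. unfold mult; simpl. unfold ba.
  replace ((-t)^n) with ((-1)^n * t^n) by (rewrite <- Rpow_mult_distr; f_equal; ring).
  change (Factorial.fact n + n * Factorial.fact n)%nat with (Factorial.fact (S n)).
  assert (HF := fact_pos (S n)). replace (@pow_n (AbsRing.Ring R_AbsRing) t n) with (t^n) by (symmetry; apply pnR). field. lra.
Qed.

Definition Bf t := PSeries ba t.

Lemma tB t : t * Bf t = 1 - exp (- t).
Proof. unfold Bf; rewrite <- PSeries_incr_1. apply is_pseries_unique, tB_series. Qed.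

Lemma B_ein t : ein_integrand t = Bf t.
Proof.
  unfold ein_integrand. destruct (Req_EM_T t 0) as [->|Ht].
  - unfold Bf; rewrite PSeries_0. unfold ba; simpl; field.
  - rewrite <- tB. field. exact Ht.
Qed.

Lemma B_ident y : exp (- y) * Bf y + Bf y = 2 * Bf (2 * y).
Proof.
  destruct (Req_EM_T y 0) as [->|Hy].
  - rewrite Rmult_0_r. unfold Bf; rewrite PSeries_0. unfold ba; simpl. rewrite Ropp_0, exp_0. field.
  - assert (E1 : Bf y = (1 - exp (-y)) / y) by (rewrite <- tB; field; exact Hy).
    assert (E2 : Bf (2*y) = (1 - exp (-(2*y))) / (2*y)) by (rewrite <- tB; field; exact Hy).
    rewrite E1, E2. replace (- (2 * y)) with (-y + -y) by ring. rewrite exp_plus. field. exact Hy.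
Qed.

Definition Ef z := PSeries (PS_Int ba) z.

Lemma Ein_E z : Ein z = Ef z.
Proof.
  unfold Ein, Ef. rewrite <- RInt_PSeries by (apply inrad, ba_rad).
  apply RInt_ext. intros x _. apply B_ein.
Qed.

Lemma E_deriv x : is_derive Ef x (Bf x).
Proof.
  unfold Ef, Bf. 
  replace (PSeries ba x) with (PSeries (PS_derive (PS_Int ba)) x).
  - apply is_derive_PSeries. apply inrad. rewrite CV_radius_Int. apply ba_rad.
  - apply PSeries_ext. intros n. unfold PS_derive, PS_Int. field. apply not_0_INR; lia.
Qed.

Lemma G_deriv x : is_derive (PSeries ga) x (PSeries ga x + PSeries ha x).
Proof.
  replace (PSeries ga x + PSeries ha x) with (PSeries (PS_derive ga) x).
  - apply is_derive_PSeries, inrad, ga_rad.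
  - rewrite <- (PSeries_ext (PS_minus (PS_derive ga) ga) ha).
    + rewrite PSeries_minus. ring.
      apply CV_radius_inside. apply inrad. rewrite CV_radius_derive. apply ga_rad.
      apply CV_radius_inside, inrad, ga_rad.
    + intros n. unfold PS_minus, PS_derive.
      change (plus (INR (S n) * ga (S n)) (opp (ga n))) with (INR (S n) * ga (S n) - ga n).
      unfold ga, ha. change (cc (S n)) with (cc n + skew_harmonic n).
      rewrite fact_simpl, mult_INR. field. split; [apply Rgt_not_eq, fact_pos| apply not_0_INR; lia].
Qed.

Lemma A_deriv x : is_derive (PSeries ha) x (PSeries ha x + Bf x).
Proof.
  replace (PSeries ha x + Bf x) with (PSeries (PS_derive ha) x).
  - apply is_derive_PSeries, inrad, ha_rad.
  - unfold Bf. rewrite <- (PSeries_ext (PS_minus (PS_derive ha) ha) ba).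
    + rewrite PSeries_minus. ring.
      apply CV_radius_inside. apply inrad. rewrite CV_radius_derive. apply ha_rad.
      apply CV_radius_inside, inrad, ha_rad.
    + intros n. unfold PS_minus, PS_derive.
      change (plus (INR (S n) * ha (S n)) (opp (ha n))) with (INR (S n) * ha (S n) - ha n).
      unfold ha, ba.
      change (skew_harmonic (S n)) with (skew_harmonic n + (-1)^n / INR (S n)).
      rewrite fact_simpl, mult_INR. field. split; [apply Rgt_not_eq, fact_pos| apply not_0_INR; lia].
Qed.

Lemma deriv_val (f : R -> R) x l1 l2 : is_derive f x l1 -> l1 = l2 -> is_derive f x l2.
Proof. intros H ->; exact H. Qed.

Lemma const0 (f : R -> R) : (forall t, is_derive f t 0) -> forall y, f y = f 0.
Proof.
  intros H y. destruct (Rtotal_order y 0) as [Hl|[->|Hg]].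
  - apply eq_is_derive; [intros t _; apply H| exact Hl].
  - reflexivity.
  - symmetry; apply eq_is_derive; [intros t _; apply H| exact Hg].
Qed.

Lemma expm_deriv y : is_derive (fun y => exp (- y)) y (- exp (- y)).
Proof. auto_derive; [exact I| ring]. Qed.

Definition Df y := Ef (2 * y) - Ef y.

Lemma D_deriv y : is_derive Df y (exp (- y) * Bf y).
Proof.
  eapply deriv_val.
  - apply (is_derive_minus (fun y => Ef (2*y)) Ef).
    + apply (is_derive_comp Ef (fun y => 2*y)). apply E_deriv.
      auto_derive; [exact I| reflexivity].
    + apply E_deriv.
  - unfold minus, plus, opp, scal; simpl; unfold mult; simpl.
    generalize (B_ident y). lra.
Qed.

Lemma A_closed y : PSeries ha y = exp y * Df y.
Proof.
  set (h := fun y => exp (- y) * PSeries ha y - Df y).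
  assert (Hd : forall t, is_derive h t 0).
  { intros t. eapply deriv_val.
    - apply (is_derive_minus (fun y => exp (- y) * PSeries ha y) Df).
      + apply (is_derive_mult (fun y => exp (- y)) (PSeries ha)).
        apply expm_deriv. apply A_deriv. intros; apply Rmult_comm.
      + apply D_deriv.
    - unfold minus, plus, opp, mult; simpl. ring. }
  assert (H0 := const0 h Hd y). unfold h in H0; cbv beta in H0.
  assert (Hz : h 0 = 0).
  { unfold h, Df. rewrite Rmult_0_r, PSeries_0. unfold ha. simpl. field. }
  unfold h in Hz; cbv beta in Hz. rewrite Hz in H0.
  assert (E : exp y * exp (- y) = 1) by (rewrite <- exp_plus, Rplus_opp_r; apply exp_0).
  replace (PSeries ha y) with (exp y * (exp (- y) * PSeries ha y)) by (rewrite <- Rmult_assoc, E; ring).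
  replace (exp (- y) * PSeries ha y) with (Df y) by lra. reflexivity.
Qed.

Lemma G_closed y : PSeries ga y = y * exp y * Df y - cosh y + 1.
Proof.
  set (h := fun y => exp (- y) * PSeries ga y - y * Df y - exp (- y) + exp (- y) * exp (- y) / 2).
  assert (Hd : forall t, is_derive h t 0).
  { intros t. unfold h.
    assert (HA := A_closed t). assert (HtB := tB t).
    assert (E : exp t * exp (- t) = 1) by (rewrite <- exp_plus, Rplus_opp_r; apply exp_0).
    eapply deriv_val.
    - apply (is_derive_plus (fun y => exp (- y) * PSeries ga y - y * Df y - exp (- y))
                            (fun y => exp (- y) * exp (- y) / 2)).
      apply (is_derive_minus (fun y => exp (- y) * PSeries ga y - y * Df y) (fun y => exp (- y))).
      apply (is_derive_minus (fun y => exp (- y) * PSeries ga y) (fun y => y * Df y)).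
      + apply (is_derive_mult (fun y => exp (- y)) (PSeries ga)).
        apply expm_deriv. apply G_deriv. intros; apply Rmult_comm.
      + apply (is_derive_mult (fun y => y) Df).
        apply (is_derive_id t). apply D_deriv. intros; apply Rmult_comm.
      + apply expm_deriv.
      + auto_derive; [exact I| reflexivity].
    - unfold minus, plus, opp, mult, one; simpl.
      rewrite HA. replace (t * (exp (- t) * Bf t)) with (exp (- t) * (t * Bf t)) by ring.
      rewrite HtB.
      replace (exp (- t) * (PSeries ga t + exp t * Df t)) with
        (exp (- t) * PSeries ga t + (exp t * exp (- t)) * Df t) by ring.
      rewrite E. field. }
  assert (H0 := const0 h Hd y). unfold h in H0; cbv beta in H0.
  assert (Hz : h 0 = - / 2).
  { unfold h, Df. rewrite Rmult_0_r, PSeries_0. unfold ga. simpl. rewrite Ropp_0, exp_0. field. }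
  unfold h in Hz; cbv beta in Hz. rewrite Hz in H0.
  assert (E : exp y * exp (- y) = 1) by (rewrite <- exp_plus, Rplus_opp_r; apply exp_0).
  replace (PSeries ga y) with (exp y * (exp (- y) * PSeries ga y)) by (rewrite <- Rmult_assoc, E; ring).
  unfold cosh.
  replace (exp (- y) * PSeries ga y) with (- / 2 + y * Df y + exp (- y) - exp (- y) * exp (- y) / 2) by lra.
  transitivity (- exp y / 2 + y * exp y * Df y + (exp y * exp (- y))
     - (exp y * exp (- y)) * exp (- y) / 2); [field|].
  rewrite E. field.
Qed.

Lemma pnR2 (x:R) k : @pow_n R_Ring x k = x ^ k.
Proof. induction k as [|k IH]; simpl; [reflexivity| rewrite IH; reflexivity]. Qed.

Lemma exp_tail_S y n : exp_tail y (S n) = exp_tail y n - y ^ (S n) / INR (Factorial.fact (S n)).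
Proof. unfold exp_tail. rewrite tech5. ring. Qed.

Lemma psum_id y N :
  sum_f_R0 (fun m => skew_harmonic (S m) * exp_tail y (S m)) N =
  cc (S (S N)) * exp_tail y (S N) + sum_f_R0 (fun k => ga k * y ^ k) (S N).
Proof.
  induction N as [|N IH].
  - simpl sum_f_R0. unfold ga. simpl cc. simpl Factorial.fact. simpl skew_harmonic. simpl INR. field.
  - rewrite tech5, IH. rewrite (tech5 (fun k => ga k * y ^ k) (S N)).
    rewrite (exp_tail_S y (S N)).
    change (cc (S (S (S N)))) with (cc (S (S N)) + skew_harmonic (S (S N))).
    unfold ga. unfold Rdiv. ring.
Qed.

Lemma exp_partial x : is_lim_seq (fun n => sum_f_R0 (fun k => x ^ k / INR (Factorial.fact k)) n) (exp x).
Proof.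
  assert (H := is_exp_Reals x). unfold is_pseries, is_series in H.
  eapply is_lim_seq_ext; [|exact H].
  intros n. simpl. rewrite sum_n_Reals. apply sum_eq. intros i _.
  rewrite pnR. reflexivity.
Qed.

Lemma exp_tail_lim x : is_lim_seq (exp_tail x) 0.
Proof.
  unfold exp_tail. replace 0 with (exp x - exp x) by ring.
  apply is_lim_seq_minus'; [apply is_lim_seq_const| apply exp_partial].
Qed.

Lemma exp_tail_series y n :
  is_series (fun k => y ^ (S n + k) / INR (Factorial.fact (S n + k))) (exp_tail y n).
Proof.
  assert (H := is_exp_Reals y). unfold is_pseries in H.
  assert (H2 := is_series_incr_n (fun k => scal (pow_n y k) (/ INR (Factorial.fact k))) (S n) (exp_tail y n)).
  eapply is_series_ext; [|apply H2].
  - intros k. rewrite pnR. reflexivity.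
  - lia.
  - match goal with |- is_series _ ?l => replace l with (exp y) end. exact H.
    simpl. unfold exp_tail. rewrite sum_n_Reals.
    match goal with |- _ = plus ?a ?b => change (plus a b) with (a + b) end.
    match goal with |- _ = _ - ?s1 + ?s2 => replace s2 with s1 end. ring.
    apply sum_eq. intros i _. rewrite <- (pnR2 y i). reflexivity.
Qed.

Lemma term_bound y n k :
  Rabs (2 ^ S n * (y ^ (S n + k) / INR (Factorial.fact (S n + k)))) <=
  (2 * Rabs y) ^ (S n + k) / INR (Factorial.fact (S n + k)).
Proof.
  assert (HF := fact_pos (S n + k)).
  unfold Rdiv. rewrite !Rabs_mult.
  rewrite (Rabs_pos_eq (/ _)) by (apply Rlt_le, Rinv_0_lt_compat; lra).
  rewrite (Rabs_pos_eq (2 ^ S n)) by (apply pow_le; lra).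
  rewrite <- RPow_abs, Rpow_mult_distr.
  rewrite <- Rmult_assoc. apply Rmult_le_compat_r; [apply Rlt_le, Rinv_0_lt_compat; lra|].
  apply Rmult_le_compat_r; [apply pow_le, Rabs_pos|].
  apply Rle_pow; [lra| lia].
Qed.

Lemma tail_bound y n : 2 ^ S n * Rabs (exp_tail y n) <= exp_tail (2 * Rabs y) n.
Proof.
  set (u := fun k => y ^ (S n + k) / INR (Factorial.fact (S n + k))).
  set (v := fun k => (2 * Rabs y) ^ (S n + k) / INR (Factorial.fact (S n + k))).
  assert (Hu : is_series u (exp_tail y n)) by apply exp_tail_series.
  assert (Hv : is_series v (exp_tail (2 * Rabs y) n)) by apply exp_tail_series.
  assert (Ev : ex_series v) by (eexists; exact Hv).
  assert (Ew : ex_series (fun k => Rabs (2 ^ S n * u k))).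
  { apply (@ex_series_le R_AbsRing R_CompleteNormedModule _ v); [|exact Ev]. intros k.
    change (norm (Rabs (2 ^ S n * u k))) with (Rabs (Rabs (2 ^ S n * u k))).
    rewrite Rabs_Rabsolu. apply term_bound. }
  rewrite <- (is_series_unique _ _ Hu), <- (is_series_unique _ _ Hv).
  rewrite <- (Rabs_pos_eq (2 ^ S n)) at 1 by (apply pow_le; lra).
  rewrite <- Rabs_mult, <- Series_scal_l.
  eapply Rle_trans; [apply Series_Rabs; exact Ew|].
  apply Series_le; [|exact Ev]. intros k; split; [apply Rabs_pos| apply term_bound].
Qed.

Theorem mainTheorem8 (y : R) :
  is_series (fun m : nat => skew_harmonic (S m) * exp_tail y (S m))
    (y * exp y * (Ein (2 * y) - Ein y) - cosh y + 1).
Proof.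
  rewrite !Ein_E. change (Ef (2*y) - Ef y) with (Df y). rewrite <- G_closed.
  assert (HG : is_lim_seq (fun N => sum_f_R0 (fun k => ga k * y^k) N) (PSeries ga y)).
  { assert (Hs := PSeries_correct _ _ (CV_radius_inside ga y (inrad ga y ga_rad))).
    unfold is_pseries, is_series in Hs.
    eapply is_lim_seq_ext; [|exact Hs]. intros n. simpl.
    rewrite sum_n_Reals. apply sum_eq. intros i _.
    rewrite <- (pnR2 y i). apply Rmult_comm. }
  assert (HE : is_lim_seq (fun N => cc (S (S N)) * exp_tail y (S N)) 0).
  { apply is_lim_seq_abs_0.
    apply is_lim_seq_le_le with (fun _ => 0) (fun N => exp_tail (2 * Rabs y) (S N)).
    - intros N. split; [apply Rabs_pos|]. rewrite Rabs_mult.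
      eapply Rle_trans; [|apply tail_bound].
      apply Rmult_le_compat_r; [apply Rabs_pos| apply cc_bound].
    - apply is_lim_seq_const.
    - apply (is_lim_seq_incr_1 (exp_tail (2 * Rabs y))). apply exp_tail_lim. }
  apply is_lim_seq_incr_1 in HG.
  assert (Hsum := is_lim_seq_plus' _ _ _ _ HE HG). rewrite Rplus_0_l in Hsum.
  unfold is_series.
  change (is_lim_seq (sum_n (fun m => skew_harmonic (S m) * exp_tail y (S m))) (PSeries ga y)).
  eapply is_lim_seq_ext; [|exact Hsum]. intros N. simpl.
  rewrite sum_n_Reals, psum_id. reflexivity.
Qed.
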